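(* Let $F$ be a generalised clause-set, and let a generic translation $(T,\gamma)$ of $F$ be given. Then the boolean clause-set $T_\gamma(F)$ is satisfiable if and only if $F$ is satisfiable.
   Context: A generalised clause-set $F$ is a finite set of clauses over variables $v$, each with a finite non-empty domain $D_v$; a clause is a finite set of literals of the form ''$v\ne\varepsilon$'' with $\varepsilon\in D_v$; $\mathrm{var}(F)$ is the set of variables occurring in $F$. An assignment $\varphi$ maps each $v\in\mathrm{var}(F)$ to a value in $D_v$; it satisfies the literal ''$v\ne\varepsilon$'' if $\varphi(v)\ne\varepsilon$, a clause if it satisfies some literal of it, and $F$ if it satisfies every clause. Boolean clauses are finite sets of boolean literals (variables or their negations), satisfied by a boolean assignment if some literal is true; a boolean clause-set is satisfiable if some assignment satisfies all its clauses. A generic translation of $F$ consists of: for each $v\in\mathrm{var}(F)$ an unsatisfiable boolean clause-set $T(v)$, such that $T(v),T(w)$ have no variables in common for $v\ne w$; and for each $v$ an injective map $\gamma_v:D_v\to T(v)$ such that for every $\varepsilon\in D_v$ the clause-set $T(v)\setminus\{\gamma_v(\varepsilon)\}$ is satisfiable. Then $T_\gamma(F)$ consists of, for each clause $C\in F$, the boolean clause $\bigcup_{(v\ne\varepsilon)\in C}\gamma_v(\varepsilon)$, together with, for each $v\in\mathrm{var}(F)$, all clauses of $T(v)\setminus\{\gamma_v(\varepsilon):\varepsilon\in D_v\}$. *)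

(* Defs.v *)
From mathcomp Require Import all_boot.
From mathcomp Require Import finmap.
Set Implicit Arguments. Unset Strict Implicit. Unset Printing Implicit Defensive.
Local Open Scope fset_scope.

(** The literal "v <> e" is the pair [(v, e)]. *)
Definition glit (V E : choiceType) := (V * E)%type.
Definition gclause (V E : choiceType) := {fset glit V E}.
Definition gclauseset (V E : choiceType) := {fset gclause V E}.

Definition gvar (V E : choiceType) (F : gclauseset V E) : {fset V} :=
  [fset l.1 | l in \bigcup_(C <- F) C].

Definition gwf (V E : choiceType) (D : V -> {fset E}) (F : gclauseset V E) :=
  forall C, C \in F -> forall l, l \in C -> l.2 \in D l.1.

(** An assignment maps each v in var(F) to a value in D_v (we use a total
    function, constrained on var(F); its values outside var(F) are irrelevant). *)
Definition gsat (V E : choiceType) (D : V -> {fset E}) (F : gclauseset V E) :=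
  exists phi : V -> E,
    (forall v, v \in gvar F -> phi v \in D v) /\
    (forall C, C \in F -> exists2 l, l \in C & phi l.1 != l.2).

(** * Boolean clause-sets over boolean variables in a choiceType [B];
    the literal [(x, true)] is x, [(x, false)] is its negation. *)
Definition blit (B : choiceType) := (B * bool)%type.
Definition bclause (B : choiceType) := {fset blit B}.
Definition bclauseset (B : choiceType) := {fset bclause B}.

Definition bvar (B : choiceType) (G : bclauseset B) : {fset B} :=
  [fset l.1 | l in \bigcup_(C <- G) C].

Definition bsat (B : choiceType) (G : bclauseset B) :=
  exists beta : B -> bool, forall C, C \in G -> exists2 l, l \in C & beta l.1 == l.2.

Definition generic_translation (V E B : choiceType) (D : V -> {fset E})
    (F : gclauseset V E) (T : V -> bclauseset B) (gamma : V -> E -> bclause B) :=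
  [/\ (forall v, v \in gvar F -> ~ bsat (T v)),
      (forall v w, v \in gvar F -> w \in gvar F -> v != w ->
          [disjoint bvar (T v) & bvar (T w)]),
      (forall v, v \in gvar F -> {in D v &, injective (gamma v)}),
      (forall v e, v \in gvar F -> e \in D v -> gamma v e \in T v) &
      (forall v e, v \in gvar F -> e \in D v -> bsat (T v `\ gamma v e))].

Definition translate (V E B : choiceType) (D : V -> {fset E})
    (F : gclauseset V E) (T : V -> bclauseset B) (gamma : V -> E -> bclause B)
    : bclauseset B :=
  [fset (\bigcup_(l <- C) gamma l.1 l.2) | C : gclause V E in F]
  `|` \bigcup_(v <- gvar F) (T v `\` [fset gamma v e | e in D v]).

(* Main.v *)
Require Import Defs.
From mathcomp Require Import all_boot.
From mathcomp Require Import finmap.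
From Stdlib Require Import ClassicalEpsilon.
Local Open Scope fset_scope.

Lemma fst_mem (K A : choiceType) (G : {fset {fset (K * A)%type}}) C l :
  C \in G -> l \in C -> l.1 \in [fset x.1 | x in \bigcup_(C <- G) C].
Proof.
move=> HC Hl; apply/imfsetP; exists l => //=.
by apply/bigfcupP; exists C => //; rewrite HC.
Qed.

Lemma unsat_falsified (B : choiceType) (G : bclauseset B) (beta : B -> bool) :
  ~ bsat G -> exists2 C, C \in G & (forall l, l \in C -> beta l.1 != l.2).
Proof.
move=> Hn.
case Hh: (has (fun C : bclause B => all (fun l : blit B => beta l.1 != l.2) C) G).
  case/hasP: Hh => C HC /allP Ha; exists C => //.
exfalso; apply: Hn; exists beta => C HC.
move/negbT/hasPn: Hh => /(_ C HC) /allPn [l Hl Hb].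
by exists l => //; move: Hb; rewrite negbK.
Qed.

Theorem lemma5 (V E B : choiceType) (D : V -> {fset E}) (F : gclauseset V E)
    (T : V -> bclauseset B) (gamma : V -> E -> bclause B) :
  (forall v, D v != fset0) ->
  gwf D F ->
  generic_translation D F T gamma ->
  (bsat (translate D F T gamma) <-> gsat D F).
Proof.
move=> HD Hwf [Hunsat Hdisj Hinj Hin Hsat]; split.
- case=> beta Hbeta.
  pose P v e := (v \in gvar F) ==> ((e \in D v) &&
      all (fun l : blit B => beta l.1 != l.2) (gamma v e)).
  have Hex : forall v, exists e, P v e.
    move=> v; rewrite /P; case Hv: (v \in gvar F); last first.
      by case/fset0Pn: (HD v) => e _; exists e.
    have [C HC Hf] := unsat_falsified _ _ beta (Hunsat v Hv).
    case HCg: (C \in [fset gamma v e | e in D v]).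
      case/imfsetP: HCg => e /= He HCe; subst C; exists e; rewrite He /=.
      by apply/allP => l Hl; apply: Hf.
    exfalso.
    have : C \in translate D F T gamma.
      rewrite in_fsetU; apply/orP; right.
      apply/bigfcupP; exists v; first by rewrite Hv.
      by rewrite in_fsetD HCg HC.
    move/Hbeta=> [l Hl /eqP Hb]; by move: (Hf l Hl); rewrite Hb eqxx.
  exists (fun v => xchoose (Hex v)); split.
    by move=> v Hv; have : P v (xchoose (Hex v)) := xchooseP (Hex v); move: (xchoose (Hex v)) => e; rewrite /P Hv /= => /andP[].
  move=> C HC.
  have : \bigcup_(l <- C) gamma l.1 l.2 \in translate D F T gamma.
    by rewrite in_fsetU; apply/orP; left; apply/imfsetP; exists C.
  move/Hbeta=> [b /bigfcupP [l /andP[Hl _] Hb] /eqP Hbe].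
  exists l => //; apply/negP => /eqP Heq.
  have Hv : l.1 \in gvar F by apply: fst_mem HC Hl.
  have : P l.1 (xchoose (Hex l.1)) := xchooseP (Hex l.1); rewrite Heq /P Hv /= => /andP[_ /allP /(_ b Hb)].
  by rewrite Hbe eqxx.
- case=> phi [Hphi Hphisat].
  have Hb : forall v, exists beta : B -> bool,
      v \in gvar F -> forall C, C \in T v `\ gamma v (phi v) ->
        exists2 l, l \in C & beta l.1 == l.2.
    move=> v; case Hv: (v \in gvar F); last by exists (fun _ => false).
    have [beta Hbeta] := Hsat v (phi v) Hv (Hphi v Hv).
    by exists beta.
  pose bf v := proj1_sig (constructive_indefinite_description _ (Hb v)).
  have Hbf v : v \in gvar F -> forall C, C \in T v `\ gamma v (phi v) ->
        exists2 l, l \in C & bf v l.1 == l.2.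
    exact: (proj2_sig (constructive_indefinite_description _ (Hb v))).
  pose beta x := if [seq v <- enum_fset (gvar F) | x \in bvar (T v)] is v :: _
                 then bf v x else false.
  have Hagree v x : v \in gvar F -> x \in bvar (T v) -> beta x = bf v x.
    move=> Hv Hx; rewrite /beta.
    have : v \in [seq v <- enum_fset (gvar F) | x \in bvar (T v)].
      by rewrite mem_filter Hx.
    case Hs: [seq v <- enum_fset (gvar F) | x \in bvar (T v)] => [|w s] //.
    move=> _.
    have : w \in [seq v <- enum_fset (gvar F) | x \in bvar (T v)] by rewrite Hs inE eqxx.
    rewrite mem_filter => /andP[Hxw Hw].
    case: (eqVneq v w) => [-> //|Hvw].
    by move: (Hdisj v w Hv Hw Hvw) => /fdisjointP /(_ x Hx); rewrite Hxw.
  have Hsatv v : v \in gvar F -> forall C, C \in T v `\ gamma v (phi v) ->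
        exists2 l, l \in C & beta l.1 == l.2.
    move=> Hv C HC; have [l Hl Hle] := Hbf v Hv C HC.
    exists l => //; rewrite (Hagree v) //.
    by apply: fst_mem Hl; move: HC; rewrite in_fsetD1 => /andP[].
  exists beta => C; rewrite in_fsetU => /orP [].
  + case/imfsetP=> C0 /= HC0 ->.
    have [l Hl Hne] := Hphisat C0 HC0.
    have Hv : l.1 \in gvar F by apply: fst_mem HC0 Hl.
    have He : l.2 \in D l.1 := Hwf C0 HC0 l Hl.
    have Hg : gamma l.1 l.2 \in T l.1 `\ gamma l.1 (phi l.1).
      rewrite in_fsetD1 Hin // andbT; apply/negP => /eqP Heq.
      by move: Hne; rewrite (Hinj _ Hv _ _ He (Hphi _ Hv) Heq) eqxx.
    have [b Hb1 Hb2] := Hsatv _ Hv _ Hg.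
    exists b => //; apply/bigfcupP; exists l => //; by rewrite Hl.
  + case/bigfcupP=> v /andP[Hv _]; rewrite in_fsetD => /andP[Hng HC].
    apply: (Hsatv v Hv); rewrite in_fsetD1 HC andbT.
    apply/negP => /eqP Heq; move: Hng; rewrite Heq.
    by rewrite (in_imfset _ (fun e => gamma v e)) //= Hphi.
Qed.
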